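(* Let $a$ be an integer and let $n$ be a positive odd integer. Then $$\det\left[(-1)^{\lfloor \frac{aj-(a+1)k}{n}\rfloor}\right]_{1\leqslant j,k\leqslant n}=\det\left[(-1)^{\lceil \frac{(a+1)j-ak}{n}\rceil}\right]_{1\leqslant j,k\leqslant n}=\left(\frac{a(a+1)}{n}\right)(-1)^{(n+1)/2}2^{n-1}.$$ Also, $$\det\left[2^{\lfloor \frac{aj-(a+1)k}{n}\rfloor}\right]_{1\leqslant j,k\leqslant n}=\left(\frac{a(a+1)}{n}\right)2^{(1-3n)/2}$$ and $$\det\left[2^{\lceil \frac{(a+1)j-ak}{n}\rceil}\right]_{1\leqslant j,k\leqslant n}=\left(\frac{a(a+1)}{n}\right)2^{(n+1)/2}.$$
   Context: $\lfloor x\rfloor$ is the largest integer not exceeding $x$ and $\lceil x\rceil$ is the least integer not smaller than $x$. $\left(\frac{\cdot}{n}\right)$ denotes the Jacobi symbol modulo the positive odd integer $n$ (equal to $0$ when the argument is not coprime to $n$, and $\left(\frac{\cdot}{1}\right)=1$). *)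

(* Defs.v *)
From mathcomp Require Import all_boot all_order all_algebra.
Set Implicit Arguments. Unset Strict Implicit. Unset Printing Implicit Defensive.
Import Order.TTheory GRing.Theory Num.Theory.
Local Open Scope ring_scope.

Definition floor_div (x : int) (n : nat) : int := (x %/ n%:Z)%Z.
Definition ceil_div (x : int) (n : nat) : int := - ((- x) %/ n%:Z)%Z.

Definition legendre (a : int) (p : nat) : int :=
  if (p%:Z %| a)%Z then 0
  else if [exists x : 'I_p, ((x%:Z) ^+ 2 == a %[mod p%:Z])%Z] then 1 else -1.

Definition jacobi (a : int) (n : nat) : int :=
  \prod_(p <- primes n) legendre a p ^+ logn p n.

(* Main.v *)
Require Import Defs.
From mathcomp Require Import all_boot all_order all_algebra all_fingroup all_solvable.
From mathcomp Require Import ring lra zify.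
Set Implicit Arguments. Unset Strict Implicit. Unset Printing Implicit Defensive.
Import Order.TTheory GRing.Theory Num.Theory.


Lemma sum_true_size (T : Type) (ts : seq T) :
  \big[addb/false]_(t <- ts) true = odd (size ts).
Proof. by elim: ts => [|t ts IH]; rewrite ?big_nil ?big_cons //= IH. Qed.

Lemma odd_perm_hom (T1 T2 : finType) (Phi : {perm T2} -> {perm T1}) :
  (forall s t, Phi (s * t)%g = (Phi s * Phi t)%g) ->
  (forall x y, x != y -> odd_perm (Phi (tperm x y))) ->
  forall s, odd_perm (Phi s) = odd_perm s.
Proof.
move=> hM hT s.
have h1 : Phi 1%g = 1%g.
  by apply: (mulIg (Phi 1%g)); rewrite -hM !mul1g.
case: (prod_tpermP s) => ts -> dts.
rewrite odd_perm_prod //.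
rewrite (big_morph Phi hM h1).
rewrite (big_morph (@odd_perm T1) (@odd_permM T1) (@odd_perm1 T1)).
rewrite -sum_true_size big_seq_cond [RHS]big_seq_cond.
apply: eq_bigr => t /andP[/(allP dts) dt _]; exact: hT.
Qed.

Lemma odd_perm_conj (T1 T2 : finType) (e : T1 -> T2) (e' : T2 -> T1)
  (s1 : {perm T1}) (s2 : {perm T2}) :
  cancel e e' -> cancel e' e ->
  (forall x, e (s1 x) = s2 (e x)) -> odd_perm s1 = odd_perm s2.
Proof.
move=> ee' e'e hs.
pose f (s : {perm T2}) := fun x => e' (s (e x)).
have finj s : injective (f s).
  move=> x y /(can_inj e'e) /perm_inj /(can_inj ee'); done.
pose Phi s := perm (finj s).
have -> : s1 = Phi s2.
  apply/permP => x; rewrite permE /f -hs; by rewrite ee'.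
apply: (odd_perm_hom (Phi := Phi)).
  move=> s t; apply/permP => x; rewrite permM !permE /f permM e'e //.
move=> x y nxy; rewrite /Phi.
have -> : perm (finj (tperm x y)) = tperm (e' x) (e' y).
  apply/permP => z; rewrite permE /f.
  case: (tpermP x y (e z)) => [ex|ey|/eqP nx /eqP ny].
  - by rewrite -ex ee' tpermL.
  - by rewrite -ey ee' tpermR.
  - rewrite tpermD ?ee' //.
      by apply: contra nx => /eqP <-; rewrite e'e.
    by apply: contra ny => /eqP <-; rewrite e'e.
rewrite odd_tperm; apply: contra nxy => /eqP h.
by rewrite -(e'e x) h e'e.
Qed.

Definition liftf (U V : finType) (u : U) (d : {perm V}) (x : U * V) : U * V :=
  if x.1 == u then (x.1, d x.2) else x.

Lemma liftf_inj (U V : finType) (u : U) (d : {perm V}) : injective (liftf u d).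
Proof.
move=> [x1 x2] [y1 y2]; rewrite /liftf /=.
case: eqP => [->|nx]; case: eqP => [->|ny] //=.
- by case=> /perm_inj ->.
- by case=> ey _; case: ny.
- by case=> ex _; case: nx.
Qed.

Arguments liftf_inj : clear implicits.
Definition liftp (U V : finType) (u : U) (d : {perm V}) := perm (@liftf_inj U V u d).

Lemma odd_liftp (U V : finType) (u : U) (d : {perm V}) : odd_perm (liftp u d) = odd_perm d.
Proof.
apply: (odd_perm_hom (Phi := @liftp U V u)).
  move=> s t; apply/permP => -[x1 x2]; rewrite permM !permE /liftf /=.
  by case: eqP => [->|nx] /=; rewrite ?eqxx ?permM //; case: eqP.
move=> x y nxy.
have -> : liftp u (tperm x y) = tperm (u, x) (u, y).
  apply/permP => -[z1 z2]; rewrite permE /liftf /=.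
  case: eqP => [->|nz].
    case: (tpermP x y z2) => [->|->|/eqP nx /eqP ny].
    - by rewrite tpermL. - by rewrite tpermR.
    - by rewrite tpermD // xpair_eqE eqxx /= eq_sym.
  by rewrite tpermD // xpair_eqE; apply/nandP; left; rewrite eq_sym; apply/eqP.
by rewrite odd_tperm xpair_eqE negb_and nxy orbT.
Qed.

Definition fibf (U V : finType) (g : U -> {perm V}) (r : seq U) (x : U * V) : U * V :=
  if x.1 \in r then (x.1, g x.1 x.2) else x.

Lemma fibf_inj (U V : finType) (g : U -> {perm V}) (r : seq U) : injective (fibf g r).
Proof.
move=> [x1 x2] [y1 y2]; rewrite /fibf /=.
case: ifP => hx; case: ifP => hy //=.
- by case=> ex; subst; move/perm_inj => ->.
- by case=> ex _; subst; rewrite hx in hy.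
- by case=> ex _; subst; rewrite hx in hy.
Qed.

Arguments fibf_inj : clear implicits.
Lemma odd_fib (U V : finType) (g : U -> {perm V}) (c : bool) (r : seq U) : uniq r -> (forall u, odd_perm (g u) = c) ->
  odd_perm (perm (@fibf_inj U V g r)) = odd (size r) && c.
Proof.
move=> ur hg; elim: r ur => [|u r IH] /=.
  move=> _; have -> : perm (@fibf_inj U V g [::]) = 1%g.
    by apply/permP => x; rewrite !permE /fibf.
  by rewrite odd_perm1.
case/andP=> nur ur.
have -> : perm (@fibf_inj U V g (u :: r)) = (liftp u (g u) * perm (@fibf_inj U V g r))%g.
  apply/permP => -[x1 x2]; rewrite permM !permE /fibf /liftf /= in_cons.
  case: eqP => [->|nx] /=.
    by rewrite (negbTE nur).
  by [].
by rewrite odd_permM odd_liftp IH // hg; case: c {hg IH}; case: (odd (size r)).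
Qed.


Lemma odd_skew (U V : finType) (al : {perm U}) (be : U -> {perm V}) (c : bool)
  (s : {perm U * V}) :
  (forall u, odd_perm (be u) = c) ->
  (forall x, s x = (al x.1, be x.1 x.2)) ->
  odd_perm s = (odd #|V| && odd_perm al) (+) (odd #|U| && c).
Proof.
move=> hb hs.
pose Q := perm (@fibf_inj U V be (enum U)).
have hQ : odd_perm Q = odd #|U| && c by rewrite (@odd_fib U V be c) ?enum_uniq // -cardE.
have gi : injective (fun x : U * V => (al x.1, x.2)).
  by move=> [x1 x2] [y1 y2] [/perm_inj -> ->].
pose G := perm gi.
have hG : odd_perm G = odd #|V| && odd_perm al.
  rewrite cardE -(@odd_fib V U (fun _ => al) (odd_perm al) (enum V)) ?enum_uniq //.
  apply: (@odd_perm_conj _ _ (fun x => (x.2, x.1)) (fun x => (x.2, x.1))).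
  - by case. - by case.
  move=> [x1 x2]; rewrite !permE /fibf /= mem_enum //.
have -> : s = (Q * G)%g.
  by apply/permP => -[x1 x2]; rewrite permM !permE /fibf /= mem_enum hs.
by rewrite odd_permM hQ hG addbC.
Qed.

Definition mulP n (a : nat) (s : {perm 'I_n}) := forall i : 'I_n, val (s i) = a * i %% n.

Arguments mulP : clear implicits.
Definition modo n (hn : (0 < n)%N) (k : nat) : 'I_n := Ordinal (ltn_pmod k hn).

Lemma mod_cancel n a i j : coprime a n -> a * i = a * j %[mod n] -> i = j %[mod n].
Proof.
move=> co.
wlog le : i j / i <= j.
  move=> W; case: (leqP i j) => h; first exact: W.
  by move=> e; symmetry; apply: W; [exact: ltnW | symmetry].
move=> /eqP; rewrite eq_sym eqn_mod_dvd ?leq_mul2l ?le ?orbT // -mulnBr.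
rewrite coprime_sym in co; rewrite (Gauss_dvdr _ co) -eqn_mod_dvd //.
by move/eqP.
Qed.

Lemma mulP_ex n a (hn : (0 < n)%N) : coprime a n -> exists s, mulP n a s.
Proof.
move=> co.
have inj : injective (fun i : 'I_n => modo hn (a * i)).
  move=> i j [] /(mod_cancel co).
  by rewrite !modn_small //; move/val_inj.
by exists (perm inj) => i; rewrite permE.
Qed.

Lemma mulP_M n a b s t : mulP n a s -> mulP n b t -> mulP n (a * b) (s * t)%g.
Proof.
move=> hs ht i; rewrite permM ht hs modnMmr.
by rewrite mulnA [b * a]mulnC.
Qed.

Lemma mulP_X n a s k : (0 < n)%N -> mulP n a s -> mulP n (a ^ k) (s ^+ k)%g.
Proof.
move=> hn hs; elim: k => [|k IH] i.
  by rewrite expg0 perm1 expn0 mul1n modn_small.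
rewrite expgSr permM hs IH modnMmr expnS.
by rewrite mulnA [a * a ^ k]mulnC.
Qed.

Lemma mulP_eq n a b s t : mulP n a s -> mulP n b t -> a = b %[mod n] -> s = t.
Proof.
move=> hs ht e; apply/permP => i; apply: val_inj; rewrite /= hs ht.
by rewrite -modnMml e modnMml.
Qed.

Lemma odd_permX (T : finType) (s : {perm T}) k :
  odd_perm (s ^+ k)%g = odd k && odd_perm s.
Proof.
elim: k => [|k IH]; first by rewrite expg0 odd_perm1.
by rewrite expgS odd_permM IH /=; case: (odd_perm s); case: (odd k).
Qed.

Lemma odd_order (T : finType) (s : {perm T}) k :
  (s ^+ k)%g = 1%g -> odd k -> odd_perm s = false.
Proof.
move=> h ok; have := odd_permX s k; rewrite h odd_perm1 ok /=.
by move=> <-.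
Qed.

Definition trf n (hn : (0 < n)%N) (c : nat) (i : 'I_n) : 'I_n := modo hn (i + c).

Lemma trf_inj n hn c : injective (@trf n hn c).
Proof.
move=> i j [] /eqP; rewrite eqn_modDr !modn_small // => /eqP; exact: val_inj.
Qed.

Definition trp n hn c : {perm 'I_n} := perm (@trf_inj n hn c).

Lemma odd_trp n hn c : odd n -> odd_perm (@trp n hn c) = false.
Proof.
move=> on; apply: (@odd_order _ _ n) => //.
have h k (i : 'I_n) : val ((trp hn c ^+ k)%g i) = (i + k * c) %% n.
  elim: k => [|k IH]; first by rewrite expg0 perm1 addn0 modn_small.
  by rewrite expgSr permM permE /= IH modnDml mulSnr addnA.
apply/permP => i; apply: val_inj; rewrite h perm1 mulnC addnC modnMDl modn_small //.
Qed.

Lemma key_mod m q r t : (0 < m)%N -> (0 < q)%N -> r < m ->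
  (r + m * t) %% (m * q) = r + m * (t %% q).
Proof.
move=> hm hq hr.
rewrite {1}(divn_eq t q) mulnDr addnCA mulnA [m * _]mulnC -mulnA.
rewrite modnMDl modn_small //.
have : t %% q < q by rewrite ltn_pmod.
move=> h; apply: (@leq_trans (m + m * (t %% q))); first by rewrite ltn_add2r.
by rewrite addnC -mulnSr leq_mul2l h orbT.
Qed.

Lemma mulP_mul n m q a s s1 s2 : n = m * q -> odd m -> odd q ->
  coprime a n -> mulP n a s -> mulP m a s1 -> mulP q a s2 ->
  odd_perm s = odd_perm s1 (+) odd_perm s2.
Proof.
move=> en om oq co hs hs1 hs2.
have hm : (0 < m)%N by case: m om {en hs1 s1}.
have hq : (0 < q)%N by case: q oq {en hs2 s2}.
have hn : (0 < n)%N by rewrite en muln_gt0 hm.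
pose be (u : 'I_m) : {perm 'I_q} := (s2 * trp hq (a * u %/ m))%g.
have hbe u : odd_perm (be u) = odd_perm s2.
  by rewrite odd_permM odd_trp // addbF.
have ginj : injective (fun x : 'I_m * 'I_q => (s1 x.1, be x.1 x.2)).
  move=> [x1 x2] [y1 y2] /= [] /perm_inj e1; subst y1.
  by move/perm_inj => ->.
pose g := perm ginj.
have -> : odd_perm s = odd_perm g.
  pose e (x : 'I_n) : 'I_m * 'I_q := (modo hm x, modo hq (x %/ m)).
  pose e' (y : 'I_m * 'I_q) : 'I_n := modo hn (y.1 + m * y.2).
  have lt (y : 'I_m * 'I_q) : y.1 + m * y.2 < n.
    apply: (@leq_trans (m + m * y.2)); first by rewrite ltn_add2r.
    by rewrite addnC -mulnSr en leq_mul2l ltn_ord orbT.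
  apply: (@odd_perm_conj _ _ e e').
  - move=> x; apply: val_inj => /=.
    have xq : x %/ m < q by rewrite ltn_divLR // mulnC -en.
    by rewrite (modn_small xq) addnC mulnC -divn_eq modn_small.
  - move=> [y1 y2]; rewrite /e /e' /=.
    have ly := lt (y1, y2); rewrite /= in ly.
    congr pair; apply: val_inj => /=; rewrite (modn_small ly).
      by rewrite addnC mulnC modnMDl modn_small.
    by rewrite addnC mulnC divnMDl // divn_small // addn0 modn_small.
  - move=> x; rewrite permE /= /e; congr pair; apply: val_inj => /=.
      have mn : m %| n by rewrite en dvdn_mulr.
      by rewrite hs1 hs /= modn_dvdm // modnMmr.
    rewrite permM permE /= hs2 /= modnDml.
    set u := x %% m; set v := x %/ m.
    have ex : a * x = a * u %% m + m * (a * u %/ m + a * v).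
      rewrite mulnDr addnA [m * _]mulnC [_ %% m + _]addnC -divn_eq mulnCA -mulnDr.
      by rewrite [m * v]mulnC addnC -divn_eq.
    have K := key_mod (a * u %/ m + a * v) hm hq (ltn_pmod (a * u) hm).
    rewrite -en in K.
    rewrite hs ex K [_ %% m + _]addnC [m * _]mulnC divnMDl // [(a * u) %% m %/ m]divn_small ?ltn_pmod // addn0 modn_mod.
    by rewrite -[in RHS]modnDml modnMmr modnDml addnC.
rewrite (@odd_skew _ _ s1 be (odd_perm s2) g hbe) ?card_ord.
  by rewrite om oq.
by move=> x; rewrite permE.
Qed.

Lemma prim_root p : prime p ->
  exists g, coprime g p /\ forall k, coprime k p -> exists i, k = g ^ i %[mod p].
Proof.
move=> pp; have p1 : 1 < p by apply: prime_gt1.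
case/cyclicP: (units_Zp_cyclic pp) => u hu.
exists (nat_of_ord (val u : 'Z_p)); split.
  have h := valP u.
  by rewrite -(natr_Zp (val u)) unitZpE // coprime_sym in h.
move=> k ck.
have uk : ((k%:R)%R : 'Z_p) \is a GRing.unit by rewrite unitZpE // coprime_sym.
have : FinRing.unit 'Z_p uk \in units_Zp p by rewrite inE.
rewrite hu => /cycleP [i ei].
exists i.
have := congr1 (fun w : {unit 'Z_p} => nat_of_ord (val w : 'Z_p)) ei.
rewrite /= FinRing.val_unitX val_Zp_nat // => ->.
rewrite -{1}(natr_Zp (val u)) -natrX val_Zp_nat //.
Qed.

Lemma odd_gen p g s : prime p -> odd p -> coprime g p ->
  (forall k, coprime k p -> exists i, k = g ^ i %[mod p]) -> mulP p g s ->
  odd_perm s.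
Proof.
move=> pp op cg hg hs.
have p0 : 0 < p by apply: prime_gt0.
have p1 : 1 < p by apply: prime_gt1.
pose z : 'I_p := Ordinal p0.
pose o : 'I_p := Ordinal p1.
have hX i : mulP p (g ^ i) (s ^+ i)%g by apply: mulP_X.
have hz : porbit s z = [set z].
  apply/setP => y; rewrite inE; apply/porbitP/eqP => [[i ->]|->].
    by apply: val_inj; rewrite hX /= muln0 mod0n.
  by exists 0; rewrite expg0 perm1.
have ho x : x != z -> porbit s x = porbit s o.
  move=> nxz; apply/eqP; rewrite eq_porbit_mem; apply/porbitP.
  have cx : coprime x p.
    rewrite coprime_sym prime_coprime // ; apply/negP => /dvdn_leq.
    have x0 : 0 < x by rewrite lt0n; apply: contra nxz => /eqP e; apply/eqP/val_inj.
    by move/(_ x0); rewrite leqNgt ltn_ord.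
  case: (hg _ cx) => i ei; exists i; apply: val_inj.
  by rewrite hX /= muln1 -ei modn_small.
have hps : porbits s = [set porbit s z; porbit s o].
  apply/setP => S; rewrite !inE; apply/imsetP/orP.
    case=> x _ ->; case: (eqVneq x z) => [->|nxz]; first by left.
    by right; rewrite ho.
  by case=> /eqP ->; eexists.
rewrite /odd_perm hps cards2 card_ord op.
suff -> : porbit s z != porbit s o by [].
rewrite hz; apply/eqP => /setP /(_ o); rewrite inE porbit_id.
by move/eqP => /(congr1 val).
Qed.

Lemma odd_mul_prime p a s : prime p -> odd p -> coprime a p -> mulP p a s ->
  odd_perm s = ~~ [exists x : 'I_p, x ^ 2 == a %[mod p]].
Proof.
move=> pp op ca hs.
have p0 : 0 < p by apply: prime_gt0.
case: (prim_root pp) => g [cg hg].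
case: (mulP_ex p0 cg) => sg hsg.
have og := odd_gen pp op cg hg hsg.
case: existsP => [[x /eqP hx]|nsq] /=.
  have cx : coprime x p.
    rewrite coprime_sym prime_coprime //; apply/negP => px.
    move: ca; rewrite coprime_sym prime_coprime // => /negP; apply.
    by rewrite /dvdn -hx -/(dvdn p (x ^ 2)) expnS dvdn_mulr.
  case: (mulP_ex p0 cx) => sx hsx.
  have -> : s = (sx * sx)%g.
    apply: (mulP_eq hs (mulP_M hsx hsx)).
    by rewrite mulnn hx.
  by rewrite odd_permM addbb.
case: (hg _ ca) => i ei.
have oi : odd i.
  apply/negPn/negP => ei2; apply: nsq.
  exists (Ordinal (ltn_pmod (g ^ i./2) p0)) => /=.
  have ie : i = i./2.*2 by rewrite -{1}(odd_double_half i) (negbTE ei2).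
  by apply/eqP; rewrite modnXm -expnM muln2 -ie ei.
have -> : s = (sg ^+ i)%g by apply: (mulP_eq hs (mulP_X i p0 hsg)).
by rewrite odd_permX oi og.
Qed.

Local Open Scope ring_scope.


Lemma jacobi_iota (a : int) n N : (n < N)%N ->
  jacobi a n = \prod_(0 <= q < N | prime q) legendre a q ^+ logn q n.
Proof.
move=> nN; rewrite /jacobi -(filter_pi_of nN) big_filter.
rewrite big_mkcond [RHS]big_mkcond; apply: eq_bigr => q _.
have -> : \pi(n) q = (q \in primes n) by [].
case: (boolP (q \in primes n)) => hq.
  by move: hq; rewrite mem_primes => /andP[-> _].
case: ifP => // pq.
by move: hq; rewrite -logn_gt0 lt0n negbK => /eqP ->; rewrite expr0.
Qed.

Lemma jacobi1 (a : int) : jacobi a 1 = 1.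
Proof. by rewrite /jacobi big_nil. Qed.

Lemma jacobiM (a : int) p m : prime p -> (0 < m)%N ->
  jacobi a (p * m) = legendre a p * jacobi a m.
Proof.
move=> pp m0.
have p0 : (0 < p)%N by apply: prime_gt0.
have lt1 : (p * m < (p * m).+1)%N by [].
have lt2 : (m < (p * m).+1)%N.
  by rewrite ltnS leq_pmull.
rewrite (jacobi_iota a lt1) (jacobi_iota a lt2).
rewrite (eq_bigr (fun q => legendre a q ^+ logn q p * legendre a q ^+ logn q m)).
  rewrite big_split /=; congr (_ * _).
  have pl : (p < (p * m).+1)%N by rewrite ltnS leq_pmulr.
  rewrite big_mkcond (bigD1_seq p) ?mem_index_iota ?iota_uniq //= pp.
  rewrite logn_prime // eqxx expr1 big1 ?mulr1 // => q nqp.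
  by case: ifP => // pq; rewrite logn_prime // (negbTE nqp) expr0.
by move=> q pq; rewrite lognM // exprD.
Qed.

Lemma legendre_nat (a : nat) p : legendre a p =
  if (p %| a)%N then 0 else if [exists x : 'I_p, (x ^ 2 == a %[mod p])%N] then 1 else -1.
Proof.
rewrite /legendre dvdzE /=.
have -> : [exists x : 'I_p, ((x%:Z) ^+ 2 == a %[mod p])%Z] =
  [exists x : 'I_p, (x ^ 2 == a %[mod p])%N].
  apply: eq_existsb => x.
  by rewrite expr2 -PoszM !modz_nat eqz_nat mulnn.
by [].
Qed.

Lemma jacobi_sign n (a : nat) s : odd n -> coprime a n -> mulP n a s ->
  jacobi a n = (-1) ^+ odd_perm s.
Proof.
elim/ltn_ind: n a s => n IH a s on co hs.
have n0 : (0 < n)%N by case: n on {IH co hs s}.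
case: (ltngtP n 1) => [|n1|n1].
- by rewrite ltnS leqn0 => /eqP e; rewrite e in n0.
- have pp := pdiv_prime n1.
  set p := pdiv n in pp.
  have pn : (p %| n)%N by apply: pdiv_dvd.
  set m := (n %/ p)%N.
  have en : n = (p * m)%N by rewrite /m mulnC divnK.
  have m0 : (0 < m)%N by rewrite en muln_gt0 in n0; case/andP: n0.
  have op : odd p by apply: (dvdn_odd pn on).
  have om : odd m.
    by apply: (@dvdn_odd _ n) => //; rewrite en dvdn_mull.
  have cp : coprime a p by apply: (coprime_dvdr pn co).
  have cm : coprime a m by apply: (@coprime_dvdr _ n) => //; rewrite en dvdn_mull.
  case: (mulP_ex (prime_gt0 pp) cp) => sp hsp.
  case: (mulP_ex m0 cm) => sm hsm.
  rewrite (mulP_mul en op om co hs hsp hsm) signr_addb.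
  have mn : (m < n)%N.
    by rewrite en -{1}[m]mul1n ltn_mul2r m0 prime_gt1.
  rewrite en jacobiM // (IH m mn a sm om cm hsm); congr (_ * _).
  rewrite legendre_nat (odd_mul_prime pp op cp hsp).
  have -> : (p %| a)%N = false.
    by apply/negP => pa; move: cp; rewrite coprime_sym prime_coprime // pa.
  by case: existsP.
- have -> : s = 1%g.
    have h (j : 'I_n) : val j = 0%N.
      by apply/eqP; rewrite -leqn0 -ltnS -n1 ltn_ord.
    by apply/permP => i; apply: val_inj; rewrite perm1 !h.
  by rewrite odd_perm1 n1 jacobi1.
Qed.

Lemma det_H (R : comNzRingType) n (y : R) :
  \det (\matrix_(i < n, l < n) (if (l <= i)%N then 1 else y)) = (1 - y) ^+ n.-1.
Proof.
case: n => [|n]; first by rewrite det_mx00.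
pose L : 'M[R]_n.+1 := \matrix_(i, l) (if (l <= i)%N then 1 else 0).
pose U : 'M[R]_n.+1 := \matrix_(i, l)
  (if i == ord0 then (if l == ord0 then 1 else y) else if i == l then 1 - y else 0).
have -> : \matrix_(i < n.+1, l < n.+1) (if (l <= i)%N then 1 else y) = L *m U.
  apply/matrixP => i l; rewrite !mxE big_ord_recl /L /U !mxE /= mul1r.
  case: (unliftP ord0 l) => [l'|] ->.
    rewrite /= (bigD1 l') //= !mxE /=.
    rewrite big1 ?addr0 => [|k nk]; last first.
      rewrite !mxE /=; case: eqP => [e|]; last by rewrite mulr0.
      by case/eqP: nk; apply: val_inj; move/(congr1 val): e => /= [].
    rewrite eqxx /bump /= !add1n.
    by case: leqP => _; rewrite ?mul1r ?mul0r ?addr0 // addrC subrK.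
  rewrite /= big1 ?addr0 // => k _; rewrite !mxE /=.
  by rewrite mulr0.
rewrite det_mulmx.
have -> : \det L = 1.
  rewrite det_trig; last by apply/is_trig_mxP => i j ij; rewrite mxE leqNgt ij.
  by rewrite big1 // => i _; rewrite mxE leqnn.
rewrite mul1r -det_tr det_trig; last first.
  apply/is_trig_mxP => i j ij; rewrite !mxE.
  have -> : (j == ord0) = false by apply/negbTE; apply: contraTneq ij => ->.
  have -> : (j == i) = false by apply/negbTE; rewrite neq_ltn ij orbT.
  by [].
rewrite big_ord_recl !mxE eqxx mul1r.
rewrite (eq_bigr (fun _ => 1 - y)) ?prodr_const ?card_ord // => i _.
by rewrite !mxE eqxx.
Qed.


Lemma jacobi_mod (x y : int) n : (x == y %[mod n%:Z])%Z -> jacobi x n = jacobi y n.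
Proof.
move=> exy; rewrite /jacobi; apply: eq_big_seq => p; rewrite mem_primes.
case/and3P => pp n0 pn; congr (_ ^+ _).
have e : (x %% p%:Z)%Z = (y %% p%:Z)%Z.
  apply/eqP; rewrite eqz_mod_dvd; apply: (@dvdz_trans n%:Z).
    by rewrite dvdzE.
  by rewrite -eqz_mod_dvd.
rewrite /legendre.
have -> : (p%:Z %| x)%Z = (p%:Z %| y)%Z.
  by apply/dvdz_mod0P/dvdz_mod0P; rewrite e.
by rewrite /eq_op /= e.
Qed.

Lemma jacobi_zero (c : nat) n : (0 < n)%N -> ~~ coprime c n -> jacobi c%:Z n = 0.
Proof.
move=> n0 nc.
set d := gcdn c n.
have d0 : (0 < d)%N by rewrite gcdn_gt0 n0 orbT.
have d1 : (1 < d)%N by rewrite ltn_neqAle eq_sym d0 andbT.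
have pp := pdiv_prime d1.
have pd : (pdiv d %| d)%N by apply: pdiv_dvd.
have pn : (pdiv d %| n)%N by apply: (dvdn_trans pd); apply: dvdn_gcdr.
have pc : (pdiv d %| c)%N by apply: (dvdn_trans pd); apply: dvdn_gcdl.
have hp : pdiv d \in primes n by rewrite mem_primes pp n0 pn.
rewrite /jacobi (bigD1_seq _ hp (primes_uniq n)) /=.
rewrite legendre_nat pc expr0n.
have -> : (logn (pdiv d) n == 0%N) = false by apply/negbTE; rewrite -lt0n logn_gt0.
by rewrite mul0r.
Qed.

Lemma collide c n : (0 < n)%N -> ~~ coprime c n ->
  exists j1 j2 : 'I_n, j1 != j2 /\ (c * j1.+1 %% n = c * j2.+1 %% n)%N.
Proof.
move=> n0 nc.
set d := gcdn c n.
have d0 : (0 < d)%N by rewrite gcdn_gt0 n0 orbT.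
have d1 : (1 < d)%N by rewrite ltn_neqAle eq_sym d0 andbT.
have lt : (n %/ d < n)%N by apply: ltn_Pdiv.
exists (Ordinal n0), (Ordinal lt); split.
  rewrite /eq_op /= eq_sym -lt0n divn_gt0 //.
  by apply: dvdn_leq => //; apply: dvdn_gcdr.
rewrite /= muln1 mulnSr.
have -> : (c * (n %/ d) = (c %/ d) * n)%N.
  rewrite -{1}(divnK (dvdn_gcdl c n)) -/d.
  by rewrite -mulnA (mulnC d) divnK // dvdn_gcdr.
by rewrite modnMDl.
Qed.

Lemma sum_succ n : (2 * \sum_(j < n) j.+1 = n * n.+1)%N.
Proof.
elim: n => [|n IH]; first by rewrite big_ord0.
rewrite big_ord_recr /= mulnDr IH.
by rewrite -mulnDl mulnC addn2.
Qed.

Lemma sum_succ_odd n : odd n -> (\sum_(j < n) j.+1 = n * (n.+1)./2)%N.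
Proof.
move=> on.
have e : n.+1 = ((n.+1)./2).*2.
  by rewrite -{1}(odd_double_half n.+1) /= on.
apply/eqP; rewrite -(eqn_pmul2l (_ : 0 < 2)%N) // sum_succ.
by rewrite mulnCA mul2n -e.
Qed.


Lemma det_floor (F : fieldType) (x : F) (a b : int) (n : nat) : x != 0 -> odd n ->
  \det (\matrix_(j < n, k < n) x ^ floor_div (a * (j.+1)%:Z - b * (k.+1)%:Z) n)
  = (jacobi (a * b) n)%:~R * x ^ ((a - b) * ((n.+1)./2)%:Z) * (1 - x^-1) ^+ n.-1.
Proof.
move=> x0 on.
have n0 : (0 < n)%N by case: n on.
have nz : n%:Z != 0 by rewrite eqz_nat -lt0n.
set a' := `|(a %% n%:Z)%Z|%N.
set b' := `|(b %% n%:Z)%Z|%N.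
have ha : (a %% n%:Z)%Z = a'%:Z by rewrite gez0_abs // modz_ge0.
have hb : (b %% n%:Z)%Z = b'%:Z by rewrite gez0_abs // modz_ge0.
pose u (j : 'I_n) := (a' * j.+1 %% n)%N.
pose w (k : 'I_n) := (b' * k.+1 %% n)%N.
have hu (j : 'I_n) : ((a * (j.+1)%:Z) %% n%:Z)%Z = (u j)%:Z.
  by rewrite -modzMml ha -PoszM modz_nat.
have hw (k : 'I_n) : ((b * (k.+1)%:Z) %% n%:Z)%Z = (w k)%:Z.
  by rewrite -modzMml hb -PoszM modz_nat.
pose Q (j : 'I_n) := floor_div (a * (j.+1)%:Z) n.
pose S (k : 'I_n) := floor_div (b * (k.+1)%:Z) n.
have eQ (j : 'I_n) : a * (j.+1)%:Z = Q j * n%:Z + (u j)%:Z by rewrite -hu; apply: divz_eq.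
have eS (k : 'I_n) : b * (k.+1)%:Z = S k * n%:Z + (w k)%:Z by rewrite -hw; apply: divz_eq.
have ult (j : 'I_n) : (u j < n)%N by rewrite ltn_pmod.
have wlt (k : 'I_n) : (w k < n)%N by rewrite ltn_pmod.
have hent (j k : 'I_n) : x ^ floor_div (a * (j.+1)%:Z - b * (k.+1)%:Z) n =
    x ^ Q j * (if (w k <= u j)%N then 1 else x^-1) * x ^ (- S k).
  have -> : a * (j.+1)%:Z - b * (k.+1)%:Z =
      (Q j - S k) * n%:Z + ((u j)%:Z - (w k)%:Z).
    by rewrite eQ eS; ring.
  rewrite /floor_div divzMDl //.
  have hw1 := wlt k; have hu1 := ult j.
  case: (leqP (w k) (u j)) => h.
    rewrite divz_small; last by rewrite absz_nat; lia.
    by rewrite addr0 expfzDr // mulr1.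
  have -> : (u j)%:Z - (w k)%:Z = (-1) * n%:Z + ((u j)%:Z - (w k)%:Z + n%:Z).
    by ring.
  rewrite divzMDl // divz_small; last by rewrite absz_nat; lia.
  by rewrite addr0 addrAC !expfzDr // exprN1.
pose G := \matrix_(j < n, k < n) (if (w k <= u j)%N then 1 else x^-1).
pose dQ := \row_(j < n) x ^ Q j.
pose dS := \row_(k < n) x ^ (- S k).
have -> : \matrix_(j < n, k < n) x ^ floor_div (a * (j.+1)%:Z - b * (k.+1)%:Z) n
    = diag_mx dQ *m G *m diag_mx dS.
  by apply/matrixP => j k; rewrite mul_mx_diag mul_diag_mx !mxE hent.
rewrite !det_mulmx !det_diag.
have hj : jacobi (a * b) n = jacobi (a' * b')%:Z n.
  apply: jacobi_mod; rewrite PoszM -ha -hb; apply/eqP; by rewrite modzMm.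
rewrite hj.
case: (boolP (coprime a' n && coprime b' n)) => [/andP[ca cb]|nc]; last first.
  have nc' : ~~ coprime (a' * b') n by rewrite coprimeMl.
  rewrite jacobi_zero // mul0r mul0r.
  suff -> : \det G = 0 by rewrite mulr0 mul0r.
  case: (boolP (coprime a' n)) => ca.
    have cb : ~~ coprime b' n by move: nc; rewrite ca.
    case: (collide n0 cb) => k1 [k2 [nk ek]].
    rewrite -det_tr; apply: (determinant_alternate nk) => j.
    by rewrite !mxE /w ek.
  case: (collide n0 ca) => j1 [j2 [nj ej]].
  apply: (determinant_alternate nj) => k.
  by rewrite !mxE /u ej.
case: (mulP_ex n0 ca) => sa hsa.
case: (mulP_ex n0 cb) => sb hsb.
set sh := trp n0 1.
have hU j : val ((sh * sa)%g j) = u j.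
  by rewrite permM hsa permE /= modnMmr addn1.
have hW k : val ((sh * sb)%g k) = w k.
  by rewrite permM hsb permE /= modnMmr addn1.
pose H := \matrix_(i < n, l < n) (if (l <= i)%N then 1 else x^-1).
have -> : G = row_perm (sh * sa)%g (col_perm (sh * sb)%g H).
  by apply/matrixP => j k; rewrite !mxE hU hW.
rewrite row_permE col_permE !det_mulmx !det_perm det_H odd_permV !odd_permM.
rewrite !odd_trp //= (jacobi_sign on (_ : coprime (a' * b') n) (mulP_M hsa hsb)); last first.
  by rewrite coprimeMl ca cb.
rewrite odd_permM.
have hprod : \prod_(i < n) dQ 0 i * \prod_(i < n) dS 0 i = x ^ ((a - b) * (uphalf n)%:Z).
  have pm (f : 'I_n -> int) : \prod_i x ^ f i = x ^ (\sum_i f i).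
    by rewrite (big_morph (fun m => x ^ m) (fun m k => expfzDr m k x0) (expr0z x)).
  have -> : \prod_(i < n) dQ 0 i = \prod_(i < n) x ^ Q i.
    by apply: eq_bigr => i _; rewrite mxE.
  have -> : \prod_(i < n) dS 0 i = \prod_(i < n) x ^ (- S i).
    by apply: eq_bigr => i _; rewrite mxE.
  rewrite !pm -expfzDr //; congr (x ^ _).
  have sU : \sum_(i < n) (u i)%:Z = \sum_(i < n) (i : nat)%:Z.
    rewrite [RHS](reindex_inj (@perm_inj _ (sh * sa)%g)).
    by apply: eq_bigr => i _; rewrite hU.
  have sW : \sum_(i < n) (w i)%:Z = \sum_(i < n) (i : nat)%:Z.
    rewrite [RHS](reindex_inj (@perm_inj _ (sh * sb)%g)).
    by apply: eq_bigr => i _; rewrite hW.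
  have s1 : \sum_(i < n) (i.+1)%:Z = (n * uphalf n)%:Z.
    by rewrite -sum_succ_odd // (big_morph Posz PoszD (erefl 0%:Z)).
  have e1 : \sum_(i < n) n%:Z * Q i = \sum_(i < n) (a * (i.+1)%:Z - (u i)%:Z).
    by apply: eq_bigr => i _; rewrite eQ; ring.
  have e2 : \sum_(i < n) n%:Z * (- S i) = - \sum_(i < n) (b * (i.+1)%:Z - (w i)%:Z).
    rewrite -sumrN; by apply: eq_bigr => i _; rewrite eS; ring.
  apply: (mulfI nz); rewrite mulrDr !mulr_sumr e1 e2.
  rewrite !big_split /= !sumrN -!mulr_sumr s1 sU sW PoszM.
  move: (\sum_(i < n) (i : nat)%:Z) (uphalf n : int) (n : int) => T h N.
  rewrite mulrBl; ring.
have sgn (c : bool) : ((-1) ^+ c : int)%:~R = (-1) ^+ c :> F.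
  by case: c => /=; rewrite ?expr1 ?expr0 ?rmorphN1 ?rmorph1.
rewrite sgn signr_addb -hprod.
move: (\prod_(i < n) dQ 0 i) (\prod_(i < n) dS 0 i) ((-1) ^+ odd_perm sa : F)
  ((-1) ^+ odd_perm sb : F) ((1 - x^-1) ^+ n.-1) => A B C D E.
ring.
Qed.


Lemma det_ceil (F : fieldType) (x : F) (a : int) (n : nat) : x != 0 -> odd n ->
  \det (\matrix_(j < n, k < n) x ^ ceil_div ((a + 1) * (j.+1)%:Z - a * (k.+1)%:Z) n)
  = (jacobi (a * (a + 1)) n)%:~R * x^-1 ^ ((a - (a + 1)) * ((n.+1)./2)%:Z)
     * (1 - x^-1^-1) ^+ n.-1.
Proof.
move=> x0 on.
rewrite -det_floor ?invr_eq0 // -det_tr; congr (\det _).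
apply/matrixP => j k; rewrite !mxE /ceil_div exprz_inv; congr (x ^ (- _)).
by rewrite /floor_div opprB.
Qed.

Lemma half_fact n : odd n -> (uphalf n + n.-1 = (3 * n).-1 %/ 2)%N.
Proof.
move=> on; have e := odd_double_half n; rewrite on in e.
have -> : uphalf n = (n.+1 %/ 2)%N by rewrite divn2.
rewrite -e -muln2; lia.
Qed.

Theorem corollary1p3 (a : int) (n : nat) (hn : (0 < n)%N) (hodd : odd n) :
  let A1 := \matrix_(j < n, k < n)
      ((-1 : rat) ^ floor_div (a * (j.+1)%:Z - (a + 1) * (k.+1)%:Z) n) in
  let A2 := \matrix_(j < n, k < n)
      ((-1 : rat) ^ ceil_div ((a + 1) * (j.+1)%:Z - a * (k.+1)%:Z) n) in
  let B1 := \matrix_(j < n, k < n)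
      ((2 : rat) ^ floor_div (a * (j.+1)%:Z - (a + 1) * (k.+1)%:Z) n) in
  let B2 := \matrix_(j < n, k < n)
      ((2 : rat) ^ ceil_div ((a + 1) * (j.+1)%:Z - a * (k.+1)%:Z) n) in
  let J : rat := (jacobi (a * (a + 1)) n)%:~R in
  [/\ \det A1 = J * (-1) ^+ (n.+1 %/ 2) * 2 ^+ n.-1,
      \det A2 = J * (-1) ^+ (n.+1 %/ 2) * 2 ^+ n.-1,
      \det B1 = J * 2 ^- ((3 * n).-1 %/ 2)
    & \det B2 = J * 2 ^+ (n.+1 %/ 2)].
Proof.
move=> A1 A2 B1 B2 J.
have e1 : a - (a + 1) = -1 by ring.
have m1 : (-1 : rat) != 0 by rewrite oppr_eq0 oner_eq0.
have t2 : (2 : rat) != 0 by [].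
rewrite divn2.
split.
- rewrite /A1 det_floor // e1 mulN1r -exprnN invr_sign (@invrN1 rat).
  by rewrite opprK.
- by rewrite /A2 det_ceil // e1 mulN1r -exprnN invrK invr_sign opprK.
- rewrite /B1 det_floor // e1 mulN1r -exprnN.
  have -> : 1 - (2 : rat)^-1 = 2^-1 by [].
  rewrite exprVn -mulrA -invfM -exprD half_fact //.
- rewrite /B2 det_ceil // e1 mulN1r -exprnN invrK.
  rewrite exprVn invrK.
  have -> : (1 - 2 : rat) = -1 by [].
  rewrite -signr_odd.
  have -> : odd n.-1 = false.
    by move: hodd; case: (n) => //= m /negbTE.
  by rewrite expr0 mulr1.
Qed.
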